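(* Consider the online submodular partition problem (notation in context) with $m\ge 2$ users, in which resources arrive one at a time in an arbitrary order $j_1,\dots,j_n$ (a permutation of $\mathcal{R}$) and each must be irrevocably assigned on arrival. Let $G$ be the output of GREEDY-ON on this arrival order, with $u_t$ the user chosen at time $t$, $d^o_t$ the discriminant at time $t$ and $c_{u_t}$ the curvature of $Z_{u_t}$. Let $\Omega$ be an optimal (offline) partition with $Z(\Omega)>0$. Then for every arrival order, $$\frac{Z(G)}{Z(\Omega)}\ \ge\ \min\left(1,\ \frac{1}{\max_{1\le t\le n}\left\{\frac{1}{d^o_t}+c_{u_t}\right\}}\right),$$ with conventions $1/\infty=0$, $1/0=\infty$. Consequently the competitive ratio of GREEDY-ON is at least the minimum over arrival orders of the right-hand side.
   Context: Resources $\mathcal{R}$, $|\mathcal{R}|=n$; users $\mathcal{U}$, $|\mathcal{U}|=m$; each user $u$ has a monotone submodular $Z_u:2^{\mathcal{R}}\to\mathbb{R}$ with $Z_u(\emptyset)=0$. For $S\subseteq\mathcal{U}\times\mathcal{R}$, $S_u=\{r:(u,r)\in S\}$ and $Z(S)=\sum_u Z_u(S_u)$. A partition assigns each resource to exactly one user (a set of pairs in which each resource appears exactly once); $\Omega$ is a partition maximizing $Z$. $\rho^u_r(S)=Z_u(S_u\cup\{r\})-Z_u(S_u)$. Curvature of $Z_u$: $c_u=1-\min\{(Z_u(S\cup\{r\})-Z_u(S))/Z_u(\{r\}): S\subseteq\mathcal{R}, r\in\mathcal{R}\setminus S, Z_u(\{r\})>0\}$. GREEDY-ON: $G^0=\emptyset$;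 at time $t=1,\dots,n$, when resource $j_t$ arrives, assign it to a user $u_t\in\arg\max_u\rho^u_{j_t}(G^{t-1})$, breaking ties in favour of the user with least curvature $c_u$; set $G^t=G^{t-1}\cup\{(u_t,j_t)\}$; output $G=G^n$. Discriminant at time $t$: $d^o_t=\rho^{u_t}_{j_t}(G^{t-1})/\max_{u'\neq u_t}\rho^{u'}_{j_t}(G^{t-1})$ (set to $\infty$ if the denominator is $0$). *)

(* Defs.v *)
From HB Require Import structures.
From mathcomp Require Import all_boot all_order all_algebra.
Set Implicit Arguments. Unset Strict Implicit. Unset Printing Implicit Defensive.
Import Order.TTheory GRing.Theory Num.Theory.
Local Open Scope ring_scope.

Section OSP.
Variables (R : realFieldType) (Usr Res : finType) (Z : Usr -> {set Res} -> R).

Definition sec (S : {set Usr * Res}) (u : Usr) : {set Res} := [set r | (u, r) \in S].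
Definition Ztot (S : {set Usr * Res}) : R := \sum_(u : Usr) Z u (sec S u).
Definition rho (u : Usr) (r : Res) (S : {set Usr * Res}) : R :=
  Z u (r |: sec S u) - Z u (sec S u).

Definition is_partition (S : {set Usr * Res}) : bool :=
  [forall r : Res, #|[set u | (u, r) \in S]| == 1%N].

(* The min is taken with neutral element 1; all the ratios are <= 1 for a
   monotone submodular function, so this only matters when the index set is
   empty (Z_u({r}) = 0 for all r, i.e. Z_u = 0), where it gives c_u = 0. *)
Definition curv (u : Usr) : R :=
  1 - \big[Num.min/1]_(S : {set Res})
        \big[Num.min/1]_(r : Res | (r \notin S) && (0 < Z u [set r]))
           ((Z u (r |: S) - Z u S) / Z u [set r]).

(* extended nonnegative reals: None = +infinity *)
Definition ext := option R.
Definition einv (x : ext) : ext :=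
  match x with None => Some 0 | Some a => if a == 0 then None else Some a^-1 end.
Definition eaddr (x : ext) (c : R) : ext := omap (fun a => a + c) x.
Definition emax (x y : ext) : ext :=
  match x, y with Some a, Some b => Some (Num.max a b) | _, _ => None end.
Definition emin1 (x : ext) : R :=
  match x with None => 1 | Some a => Num.min 1 a end.

Definition discr (G : {set Usr * Res}) (u : Usr) (j : Res) : ext :=
  let second := \big[Num.max/0]_(v : Usr | v != u) rho v j G in
  if second == 0 then None else Some (rho u j G / second).

Definition greedy_choice (G : {set Usr * Res}) (u : Usr) (j : Res) : bool :=
  [forall v : Usr, rho v j G <= rho u j G] &&
  [forall v : Usr, (rho v j G == rho u j G) ==> (curv u <= curv v)].

Fixpoint greedy_ok (G : {set Usr * Res}) (run : seq (Usr * Res)) : bool :=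
  match run with
  | [::] => true
  | (u, j) :: rest => greedy_choice G u j && greedy_ok ((u, j) |: G) rest
  end.

(* max_t { 1/d^o_t + c_{u_t} } (all terms are >= 0, so 0 is a neutral start) *)
Fixpoint bound_max (G : {set Usr * Res}) (run : seq (Usr * Res)) : ext :=
  match run with
  | [::] => Some 0
  | (u, j) :: rest =>
      emax (eaddr (einv (discr G u j)) (curv u)) (bound_max ((u, j) |: G) rest)
  end.

End OSP.

(* Main.v *)
Require Import Defs.
From HB Require Import structures.
From mathcomp Require Import all_boot all_order all_algebra.
From mathcomp Require Import lra.
Import Order.TTheory GRing.Theory Num.Theory.
Set Implicit Arguments. Unset Strict Implicit. Unset Printing Implicit Defensive.
Local Open Scope ring_scope.

Lemma sec_setU1 (Usr Res : finType) (S : {set Usr * Res}) u j v :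
  sec ((u, j) |: S) v = if v == u then j |: sec S v else sec S v.
Proof.
apply/setP => r; case: (eqVneq v u) => [->|ne]; rewrite /sec !inE xpair_eqE ?eqxx //.
by rewrite (negbTE ne).
Qed.

Lemma sec_sub (Usr Res : finType) (A B : {set Usr * Res}) v :
  A \subset B -> sec A v \subset sec B v.
Proof. by move=> AB; apply/subsetP => r; rewrite !inE; apply: (subsetP AB). Qed.

Lemma Ztot_U1 (R : realFieldType) (Usr Res : finType) (Z : Usr -> {set Res} -> R)
  (S : {set Usr * Res}) u j :
  Ztot Z ((u, j) |: S) = Ztot Z S + rho Z u j S.
Proof.
rewrite /Ztot (bigD1 u) //= [in RHS](bigD1 u) //= sec_setU1 eqxx.
rewrite (eq_bigr (fun v => Z v (sec S v))); last first.
  by move=> v nv; rewrite sec_setU1 (negbTE nv).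
rewrite /rho; lra.
Qed.

Lemma Ztot_mono (R : realFieldType) (Usr Res : finType) (Z : Usr -> {set Res} -> R)
  (Hmono : forall u (A B : {set Res}), A \subset B -> Z u A <= Z u B)
  (A B : {set Usr * Res}) : A \subset B -> Ztot Z A <= Ztot Z B.
Proof. by move=> AB; apply: ler_sum => v _; apply: Hmono; apply: sec_sub. Qed.

Lemma submod_marg (R : realFieldType) (Usr Res : finType) (Z : Usr -> {set Res} -> R)
  (Hmono : forall u (A B : {set Res}), A \subset B -> Z u A <= Z u B)
  (Hsub : forall u (A B : {set Res}), Z u (A :|: B) + Z u (A :&: B) <= Z u A + Z u B)
  u (A B : {set Res}) r :
  A \subset B -> Z u (r |: B) - Z u B <= Z u (r |: A) - Z u A.
Proof.
move=> AB; have := Hsub u (r |: A) B.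
rewrite -setUA (setUidPr AB).
have : Z u A <= Z u ((r |: A) :&: B).
  by apply: Hmono; rewrite subsetI subsetUr AB.
lra.
Qed.

Definition ele (R : realFieldType) (x : option R) (M : R) : bool :=
  if x is Some a then a <= M else false.

Lemma ele_emax (R : realFieldType) (x y : option R) M :
  ele (emax x y) M = ele x M && ele y M.
Proof. by case: x => [a|]; case: y => [b|] //=; rewrite /ele /= ?ge_max ?andbF. Qed.

Fixpoint addO (Usr Res : finType) (o : Res -> Usr) (W : {set Usr * Res})
  (run : seq (Usr * Res)) : {set Usr * Res} :=
  if run is p :: rest then addO o ((o p.2, p.2) |: W) rest else W.

Lemma addO_sub (Usr Res : finType) (o : Res -> Usr) (run : seq (Usr * Res)) (W : {set Usr * Res}) : W \subset addO o W run.
Proof.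
elim: run W => [|p rest IH] W //=.
exact: subset_trans (subsetUr _ _) (IH _).
Qed.

Lemma addO_mem (Usr Res : finType) (o : Res -> Usr) (run : seq (Usr * Res)) (W : {set Usr * Res}) j :
  j \in map snd run -> (o j, j) \in addO o W run.
Proof.
elim: run W => [|p rest IH] W //=; rewrite in_cons => /orP[/eqP ->|jr]; last exact: IH.
apply: (subsetP (addO_sub _ _ _)); by rewrite !inE eqxx.
Qed.

Lemma final_ineq (R : realFieldType) (B zg zo : R) :
  0 < zo -> 0 <= zg -> zo <= Num.max 1 B * zg -> emin1 (einv (Some B)) <= zg / zo.
Proof.
move=> zo0 zg0 H; rewrite ler_pdivlMr //= .
case: eqP => [B0|/eqP nB] /=.
  by move: H; rewrite B0 max_l ?ler01 // !mul1r.
have [B1|B1] := leP B 1.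
  move: H; rewrite max_l // mul1r => H.
  apply: le_trans H; rewrite -[leRHS]mul1r; apply: ler_wpM2r; first exact: ltW.
  by rewrite ge_min lexx.
move: H; rewrite (max_r (ltW B1)) => H.
have Bp : 0 < B := lt_trans ltr01 B1.
apply: (@le_trans _ _ (B^-1 * zo)).
  by apply: ler_wpM2r; [exact: ltW | rewrite ge_min lexx orbT].
apply: (@le_trans _ _ (B^-1 * (B * zg))).
  by apply: ler_wpM2l => //; rewrite invr_ge0 ltW.
by rewrite mulKf.
Qed.

Lemma curv_bound (R : realFieldType) (Usr Res : finType) (Z : Usr -> {set Res} -> R)
  (Hmono : forall u (A B : {set Res}), A \subset B -> Z u A <= Z u B)
  u (S : {set Res}) r :
  r \notin S -> 0 < Z u [set r] ->
  (1 - curv Z u) * Z u [set r] <= Z u (r |: S) - Z u S.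
Proof.
move=> rS Zr; rewrite -ler_pdivlMr // /curv.
set m := \big[_/_]_(S0 : {set Res}) _.
have -> : 1 - (1 - m) = m by lra.
apply: le_trans (bigmin_le _ S _) _.
by apply: (bigmin_le_cond _ (j := r)); rewrite rS Zr.
Qed.

Lemma curv_le1 (R : realFieldType) (Usr Res : finType) (Z : Usr -> {set Res} -> R)
  (Hmono : forall u (A B : {set Res}), A \subset B -> Z u A <= Z u B) u :
  0 <= 1 - curv Z u.
Proof.
rewrite /curv.
set m := \big[_/_]_(S0 : {set Res}) _.
have -> : 1 - (1 - m) = m by lra.
apply: le_bigmin => [|S _]; first exact: ler01.
apply: le_bigmin => [|r /andP[_ Zr]]; first exact: ler01.
apply: divr_ge0; last exact: ltW.
by rewrite subr_ge0; apply: Hmono; apply: subsetUr.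
Qed.

Theorem theorem5 (R : realFieldType) (Usr Res : finType)
  (Z : Usr -> {set Res} -> R)
  (Hm : (2 <= #|Usr|)%N)
  (Hz0 : forall u, Z u set0 = 0)
  (Hmono : forall u (A B : {set Res}), A \subset B -> Z u A <= Z u B)
  (Hsub : forall u (A B : {set Res}), Z u (A :|: B) + Z u (A :&: B) <= Z u A + Z u B)
  (Omega : {set Usr * Res})
  (HOpart : is_partition Omega)
  (HOopt : forall P : {set Usr * Res}, is_partition P -> Ztot Z P <= Ztot Z Omega)
  (HOpos : 0 < Ztot Z Omega)
  (run : seq (Usr * Res))
  (Horder : perm_eq (map snd run) (enum Res))
  (Hgreedy : greedy_ok Z set0 run) :
  emin1 (einv (bound_max Z set0 run)) <= Ztot Z [set x in run] / Ztot Z Omega.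
Proof.
have Zge0 : forall u A, 0 <= Z u A.
  by move=> u A; rewrite -(Hz0 u); apply: Hmono; apply: sub0set.
have Ztot_ge0 : forall S, 0 <= Ztot Z S by move=> S; apply: sumr_ge0 => v _.
have rho_ge0 : forall u j S, 0 <= rho Z u j S.
  by move=> u j S; rewrite /rho subr_ge0; apply: Hmono; apply: subsetUr.
have rho_anti : forall v j (A B : {set Usr * Res}), A \subset B -> rho Z v j B <= rho Z v j A.
  by move=> v j A B AB; apply: submod_marg => //; apply: sec_sub.
have rho_single : forall u j S, rho Z u j S <= Z u [set j].
  move=> u j S; have := submod_marg Hmono Hsub u j (sub0set (sec S u)).
  by rewrite setU0 Hz0 subr0.
case Hb: (bound_max Z set0 run) => [B|]; last first.
  rewrite /= ge_min; apply/orP; right.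
  by apply: divr_ge0 => //; apply: ltW.
have [u0 _] : exists u0 : Usr, u0 \in Usr.
  by apply/card_gt0P; exact: (leq_trans _ Hm).
pose o := fun r => odflt u0 [pick u | (u, r) \in Omega].
have Ho : forall u r, ((u, r) \in Omega) = (u == o r).
  move=> u r; have := forallP HOpart r; case/cards1P => v Hv.
  have Hm' : forall u', ((u', r) \in Omega) = (u' == v).
    by move=> u'; rewrite -in_set1 -Hv inE.
  have ov : o r = v.
    rewrite /o; case: pickP => [w|H]; first by rewrite Hm' => /eqP.
    by move: (H v); rewrite Hm' eqxx.
  by rewrite Hm' ov.
pose M := Num.max 1 B.
pose K := M - 1.
have K0 : 0 <= K by rewrite subr_ge0 le_max lexx.
have key : forall (rn : seq (Usr * Res)) (G W : {set Usr * Res}),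
  greedy_ok Z G rn -> uniq (map snd rn) ->
  (forall p, p \in rn -> forall v, (v, p.2) \notin G) ->
  G :|: [set x in rn] \subset W -> ele (bound_max Z G rn) M ->
  Ztot Z (addO o W rn) - Ztot Z W
    - (Ztot Z (Omega :|: (G :|: [set x in rn])) - Ztot Z (Omega :|: G))
   <= K * Ztot Z (G :|: [set x in rn]) - K * Ztot Z G.
  elim => [|[u j] rest IH] G W /=.
    move=> _ _ _ _ _.
    have -> : [set x in [::]] = set0 :> {set Usr * Res} by apply/setP => x; rewrite !inE.
    rewrite setU0; lra.
  move=> /andP[Hgc Hok] /andP[Hjn Hun] Hfr HW.
  rewrite ele_emax => /andP[Hterm Hrest].
  have Eset : G :|: [set x in (u, j) :: rest] = ((u, j) |: G) :|: [set x in rest].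
    by apply/setP => x; rewrite !inE; bool_congr.
  rewrite Eset in HW *.
  have Hfr' : forall p, p \in rest -> forall v, (v, p.2) \notin (u, j) |: G.
    move=> p pr v; rewrite in_setU1 negb_or (Hfr p _ v) ?andbT; last by rewrite in_cons pr orbT.
    rewrite xpair_eqE; apply/negP => /andP[_ /eqP pj].
    by move: Hjn; rewrite -pj (map_f snd pr).
  have HW' : ((u, j) |: G) :|: [set x in rest] \subset (o j, j) |: W.
    exact: subset_trans HW (subsetUr _ _).
  have IH' := IH _ _ Hok Hun Hfr' HW' Hrest.
  rewrite (Ztot_U1 Z W) (setUCA Omega [set (u, j)] G) (Ztot_U1 Z (Omega :|: G)) (Ztot_U1 Z G) mulrDr in IH'.
  suff step : rho Z (o j) j W - rho Z u j (Omega :|: G) <= K * rho Z u j G by lra.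
  have ujW : (u, j) \in W by apply: (subsetP HW); rewrite !inE eqxx.
  have GW : G \subset W.
    apply: subset_trans _ HW; exact: subset_trans (subsetUr [set (u, j)] G) (subsetUl _ _).
  have Hj : forall v, (v, j) \notin G.
    by move=> v; apply: (Hfr (u, j)); rewrite in_cons eqxx.
  case/andP: Hgc => /forallP Hmax _.
  move: Hterm; rewrite /discr.
  set s := \big[Num.max/0]_(v | v != u) rho Z v j G.
  have s0 : 0 <= s by apply: bigmax_ge_id.
  have sr : s <= rho Z u j G by apply: bigmax_le => // v _; apply: Hmax.
  have c1 := curv_le1 Hmono u.
  case: (eqVneq u (o j)) => [uo|uo] Hterm.
    rewrite -uo (_ : rho Z u j W = 0); last first.
      by rewrite /rho (setUidPr _) ?subrr // sub1set inE.
    have := rho_ge0 u j (Omega :|: G); have := mulr_ge0 K0 (rho_ge0 u j G); lra.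
  have dW : rho Z (o j) j W <= s.
    apply: le_trans (rho_anti _ _ _ _ GW) _.
    by apply: (le_bigmax_cond _ (j := o j)); rewrite eq_sym.
  have jH : j \notin sec (Omega :|: G) u.
    by rewrite /sec inE in_setU Ho (negbTE uo) (negbTE (Hj u)).
  have dH : (1 - curv Z u) * rho Z u j G <= rho Z u j (Omega :|: G).
    have [Zp|Zn] := ltP 0 (Z u [set j]).
      have := curv_bound Hmono jH Zp; rewrite -/(rho Z u j (Omega :|: G)) => Hc.
      apply: le_trans Hc.
      exact: (ler_wpM2l c1 (rho_single u j G)).
    have r0 : rho Z u j G = 0.
      by apply/eqP; rewrite eq_le rho_ge0 andbT; apply: le_trans (rho_single _ _ _) Zn.
    by rewrite r0 mulr0 rho_ge0.
  rewrite mulrBl mul1r in dH.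
  rewrite /K mulrBl mul1r.
  move: Hterm; case: eqP => [s00|/eqP sn0] /=.
    rewrite /ele /= add0r => cM.
    have : 0 <= M * rho Z u j G - curv Z u * rho Z u j G.
      by rewrite -mulrBl mulr_ge0 // subr_ge0.
    lra.
  have sp : 0 < s by rewrite lt_def sn0 s0.
  have rp : 0 < rho Z u j G := lt_le_trans sp sr.
  rewrite gt_eqF ?divr_gt0 // /ele /= invf_div => Ht.
  have := ler_wpM2r (ltW rp) Ht; rewrite mulrDl divfK ?gt_eqF //.
  lra.
have Hun0 : uniq (map snd run) by rewrite (perm_uniq Horder) enum_uniq.
have Hall : forall r, r \in map snd run by move=> r; rewrite (perm_mem Horder) mem_enum.
have Ztot0 : Ztot Z set0 = 0.
  rewrite /Ztot big1 // => v _; rewrite (_ : sec set0 v = set0) ?Hz0 //.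
  by apply/setP => r; rewrite !inE.
have := key run set0 [set x in run] Hgreedy Hun0.
rewrite set0U setU0 Ztot0 mulr0 subr0.
move=> /(_ _ (subxx _)) H.
have {H} H : Ztot Z (addO o [set x in run] run) - Ztot Z [set x in run] -
         (Ztot Z (Omega :|: [set x in run]) - Ztot Z Omega) <= K * Ztot Z [set x in run].
  apply: H; last by rewrite Hb /ele le_max lexx orbT.
  by move=> p _ v; rewrite inE.
have sub : Ztot Z (Omega :|: [set x in run]) <= Ztot Z (addO o [set x in run] run).
  apply: (Ztot_mono Hmono); rewrite subUset addO_sub andbT.
  apply/subsetP => -[v r] vr; have := Ho v r; rewrite vr => /esym/eqP ->.
  exact: addO_mem (Hall r).
apply: final_ineq => //.
rewrite /K mulrBl mul1r in H.
fold M; lra.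
Qed.
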